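(* Assume (A.a). Let $\beta\in[0,1)$, $\lambda\in\mathbb R$, $\{\alpha_k\}_k\subset(0,\infty)$, and let the sequences be generated by RRM. For $k\ge1$ let $\sigma_k^2:=\frac1n\sum_{t=1}^n\|\nabla f_t(z^k)-\nabla f(z^k)\|^2$. (a) For all $k\ge1$, $i\in\{1,\dots,m\}$ and $a=(a_1,\dots,a_i)\in\mathbb R_+^i$ (and arbitrary permutations), \[ \Big\|\sum_{t=1}^i a_td_t^k\Big\|^2\le 3\|a\|_1\|a\|_\infty\Big[L^2\sum_{t=1}^m\|\hat y_t^k-z^k\|^2+m\sigma_k^2\Big]+3\|a\|_1^2\|\nabla f(z^k)\|^2 . \] (b) If in addition (A.c) holds, then for all such $k,i,a$, \[ \mathbb E_k\Big[\Big\|\sum_{t=1}^i a_td_t^k\Big\|^2\Big]\le 3\|a\|_1\|a\|_\infty\Big[L^2\sum_{t=1}^m\mathbb E_k[\|\hat y_t^k-z^k\|^2]+b^{-1}\sigma_k^2\Big]+3\|a\|_1^2\|\nabla f(z^k)\|^2 . \]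
   Context: Let $n,d\in\mathbb N$, $f_1,\dots,f_n:\mathbb R^d\to\mathbb R$ continuously differentiable, $f:=\frac1n\sum_{i=1}^n f_i$, $[n]:=\{1,\dots,n\}$. Fix a mini-batch size $b\in\mathbb N$ with $m:=n/b\in\mathbb N$. Random reshuffling with momentum (RRM) with step sizes $\{\alpha_k\}_{k\ge1}\subset(0,\infty)$ and parameters $\beta,\lambda$ generates sequences as follows: start with $x^1=\tilde x^1\in\mathbb R^d$; for each $k=1,2,\dots$ choose a permutation $\pi^k=(\pi^k_1,\dots,\pi^k_n)$ of $[n]$, set $y_0^k=\tilde x^k$, $y_1^k=x^k$, and for $i=1,\dots,m$ compute $\hat y_i^k=y_i^k+\lambda(y_i^k-y_{i-1}^k)$, $d_i^k=\frac1b\sum_{j=(i-1)b+1}^{ib}\nabla f_{\pi^k_j}(\hat y_i^k)$, $y_{i+1}^k=y_i^k-\alpha_kd_i^k+\beta(y_i^k-y_{i-1}^k)$; then set $\tilde x^{k+1}=y_m^k$, $x^{k+1}=y_{m+1}^k$. The proxy iterates are $z^k:=\frac{1}{1-\beta}x^k-\frac{\beta}{1-\beta}\tilde x^k$. Assumption (A.a): there are $L>0$ and $\bar f\in\mathbb R$ such that each $\nabla f_i$ is $L$-Lipschitz and $f_i(x)\ge\bar f$ for all $x\in\mathbb R^d$, $i\in[n]$. Assumption (A.c): the permutations $\pi^1,\pi^2,\dots$ are independent and each is uniformly distributed over all permutations of $[n]$. $\mathbb E_k[\cdot]$ denotes conditional expectation given $\pi^1,\dots,\pi^{k-1}$ (so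 $x^k,\tilde x^k,z^k$ are fixed and only $\pi^k$ is random). $\|\cdot\|_1,\|\cdot\|_\infty$ are the $\ell_1$ and $\ell_\infty$ norms. *)

(* Defs.v *)
From HB Require Import structures.
From mathcomp Require Import all_boot all_order all_algebra all_fingroup.
From mathcomp Require Import all_classical all_reals all_analysis.
Set Implicit Arguments. Unset Strict Implicit. Unset Printing Implicit Defensive.
Import Order.TTheory GRing.Theory Num.Theory.
Import numFieldNormedType.Exports.
Local Open Scope ring_scope.

Section RRM.
Variables (R : realType) (d n : nat).

Definition dotv (u v : 'rV[R]_d) : R := \sum_(j < d) u 0 j * v 0 j.
Definition sqnorm (v : 'rV[R]_d) : R := \sum_(j < d) v 0 j ^+ 2.
Definition enorm (v : 'rV[R]_d) : R := Num.sqrt (sqnorm v).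

(* grad i = the gradient of f_i, i ranging over 'I_n = {0..n-1} (index i
   stands for f_{i+1} of the paper). *)
Variable grad : 'I_n -> 'rV[R]_d -> 'rV[R]_d.

Definition gradf (x : 'rV[R]_d) : 'rV[R]_d := n%:R^-1 *: \sum_(i < n) grad i x.

Definition sigma2 (z : 'rV[R]_d) : R :=
  n%:R^-1 * \sum_(t < n) sqnorm (grad t z - gradf z).

Variables (b : nat) (beta lam : R).

(* One inner step.  Given (y_{i-1}, y_i):
     yhat_i = y_i + lam (y_i - y_{i-1}),
     d_i = (1/b) sum_{j=(i-1)b+1}^{ib} grad_{pi_j}(yhat_i)
   (paper position j in 1..n is the ordinal j-1 here). *)
Definition yhat_of (Y : 'rV[R]_d * 'rV[R]_d) : 'rV[R]_d :=
  Y.2 + lam *: (Y.2 - Y.1).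

Definition dir_of (p : {perm 'I_n}) (i : nat) (Y : 'rV[R]_d * 'rV[R]_d) : 'rV[R]_d :=
  b%:R^-1 *: \sum_(j < n | ((i.-1 * b <= j) && (j < i * b))%N) grad (p j) (yhat_of Y).

(* inner p alpha x xt i = (y_i, y_{i+1}) for the epoch with permutation p,
   step size alpha, started from x^k = x and xtilde^k = xt. *)
Fixpoint inner (p : {perm 'I_n}) (alpha : R) (x xt : 'rV[R]_d) (i : nat)
  : 'rV[R]_d * 'rV[R]_d :=
  match i with
  | 0 => (xt, x)
  | i'.+1 =>
      let Y := inner p alpha x xt i' in
      (Y.2, Y.2 - alpha *: dir_of p i'.+1 Y + beta *: (Y.2 - Y.1))
  end.

Definition yhat p alpha x xt (i : nat) : 'rV[R]_d :=
  yhat_of (inner p alpha x xt i.-1).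
Definition dir p alpha x xt (i : nat) : 'rV[R]_d :=
  dir_of p i (inner p alpha x xt i.-1).

Variable m : nat.

(* Outer loop: outer pi alpha x1 j = (x^{j+1}, xtilde^{j+1});
   epoch k uses permutation pi k and step size alpha k, and
   xtilde^{k+1} = y_m^k, x^{k+1} = y_{m+1}^k. *)
Fixpoint outer (pi : nat -> {perm 'I_n}) (alpha : nat -> R) (x1 : 'rV[R]_d)
  (j : nat) : 'rV[R]_d * 'rV[R]_d :=
  match j with
  | 0 => (x1, x1)
  | j'.+1 =>
      let X := outer pi alpha x1 j' in
      let Y := inner (pi j) (alpha j) X.1 X.2 m in
      (Y.2, Y.1)
  end.

Definition xk pi alpha x1 (k : nat) : 'rV[R]_d := (outer pi alpha x1 k.-1).1.
Definition xtk pi alpha x1 (k : nat) : 'rV[R]_d := (outer pi alpha x1 k.-1).2.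

Definition zk pi alpha x1 (k : nat) : 'rV[R]_d :=
  (1 - beta)^-1 *: xk pi alpha x1 k - (beta / (1 - beta)) *: xtk pi alpha x1 k.

End RRM.

(* Conditional expectation E_k under (A.c): pi^k is uniform over all
   permutations of 'I_n and independent of pi^1..pi^{k-1}, while the
   integrand depends on the past only through x^k, xtilde^k.  Hence E_k of a
   quantity F(pi^k) is the uniform average over all permutations. *)
Definition Eperm (R : realType) (n : nat) (F : {perm 'I_n} -> R) : R :=
  (#|{: {perm 'I_n}}|%:R)^-1 * \sum_(p : {perm 'I_n}) F p.

(* Main.v *)
Require Import Defs.
From HB Require Import structures.
From mathcomp Require Import all_boot all_order all_algebra all_fingroup.
From mathcomp Require Import all_classical all_reals all_analysis.
From mathcomp Require Import ring lra zify.
Import Order.TTheory GRing.Theory Num.Theory.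
Import numFieldNormedType.Exports.
Local Open Scope ring_scope.


Section Gen.
Variable R : realType.

Lemma sq3 (x y z : R) : (x + y + z) ^+ 2 <= 3 * (x ^+ 2 + y ^+ 2 + z ^+ 2).
Proof.
have h1 := sqr_ge0 (x - y); have h2 := sqr_ge0 (y - z); have h3 := sqr_ge0 (x - z).
rewrite !sqrrB in h1 h2 h3; rewrite !sqrrD. lra.
Qed.

Lemma cs_w (I : finType) (W v : I -> R) : (forall k, 0 <= W k) ->
  (\sum_k W k * v k) ^+ 2 <= (\sum_k W k) * \sum_k W k * v k ^+ 2.
Proof.
move=> W0.
have E : \sum_k \sum_l W k * W l * (v k - v l) ^+ 2 =
   2 * ((\sum_k W k) * (\sum_k W k * v k ^+ 2) - (\sum_k W k * v k) ^+ 2).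
  transitivity (\sum_k \sum_l (W k * (W l * v l ^+ 2) + (W k * v k ^+ 2) * W l
      - 2 * (W k * v k * (W l * v l)))).
    by apply: eq_bigr => k _; apply: eq_bigr => l _; ring.
  under eq_bigr => k _ do rewrite sumrB big_split /= -!mulr_sumr.
  rewrite sumrB big_split /= -!mulr_suml -mulr_sumr -mulr_suml expr2. ring.
have : 0 <= \sum_k \sum_l W k * W l * (v k - v l) ^+ 2.
  apply: sumr_ge0 => k _; apply: sumr_ge0 => l _.
  by rewrite mulr_ge0 ?sqr_ge0 // mulr_ge0.
rewrite E. lra.
Qed.

End Gen.


Section Perm.
Variable R : realType.
Variable n : nat.
Variable h : 'I_n -> R.

Lemma card_perm_gt0 : (0 < #|{: {perm 'I_n}}|)%N.
Proof. by apply/card_gt0P; exists 1%g. Qed.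

Lemma perm_diag (j : 'I_n) :
  \sum_(p : {perm 'I_n}) h (p j) ^+ 2 =
  (#|{: {perm 'I_n}}|%:R / n%:R) * \sum_s h s ^+ 2.
Proof.
have S : forall j0, \sum_(p : {perm 'I_n}) h (p j0) ^+ 2 = \sum_(p : {perm 'I_n}) h (p j) ^+ 2.
  move=> j0; rewrite (reindex_inj (mulgI (tperm j0 j))) /=.
  by apply: eq_bigr => q _; rewrite permM tpermL.
have n0 : (0 < n)%N by apply: leq_ltn_trans (ltn_ord j).
have : n%:R * \sum_(p : {perm 'I_n}) h (p j) ^+ 2 =
    #|{: {perm 'I_n}}|%:R * \sum_s h s ^+ 2.
  transitivity (\sum_(j0 : 'I_n) \sum_(p : {perm 'I_n}) h (p j0) ^+ 2).
    by rewrite (eq_bigr _ (fun j0 _ => S j0)) sumr_const card_ord mulr_natl.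
  rewrite exchange_big /=.
  transitivity (\sum_(p : {perm 'I_n}) \sum_s h s ^+ 2).
    apply: eq_bigr => p _.
    by rewrite [RHS](reindex_inj (@perm_inj _ p)).
  by rewrite sumr_const mulr_natl.
move=> E.
have nn : n%:R != 0 :> R by rewrite pnatr_eq0 -lt0n.
apply: (mulfI nn); rewrite E mulrA mulrCA divff // mulr1 //.
Qed.

Lemma perm_off (j j' : 'I_n) : j != j' -> \sum_s h s = 0 ->
  \sum_(p : {perm 'I_n}) h (p j) * h (p j') <= 0.
Proof.
move=> jj' h0.
set T := \sum_(p : {perm 'I_n}) h (p j) * h (p j').
have S : forall j'', j'' != j ->
   \sum_(p : {perm 'I_n}) h (p j) * h (p j'') = T.
  move=> j'' jj''.
  rewrite /T [RHS](reindex_inj (mulgI (tperm j' j''))) /=.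
  apply: eq_bigr => q _; rewrite !permM tpermL tpermD //.
  by rewrite eq_sym.
have n2 : (1 < n)%N.
  have := ltn_ord j; have := ltn_ord j'.
  move: jj'; rewrite -val_eqE /=; lia.
have E1 : \sum_(j'' | j'' != j) \sum_(p : {perm 'I_n}) h (p j) * h (p j'')
          = (n%:R - 1) * T.
  rewrite (eq_bigr _ S).
  have e : \sum_(j'' : 'I_n) T = T + \sum_(j'' | j'' != j) T by rewrite (bigD1 j).
  rewrite sumr_const card_ord in e.
  rewrite mulrBl mul1r mulr_natl. lra.
have E2 : \sum_(j'' | j'' != j) \sum_(p : {perm 'I_n}) h (p j) * h (p j'')
          = - \sum_(p : {perm 'I_n}) h (p j) ^+ 2.
  rewrite exchange_big /= -sumrN; apply: eq_bigr => p _.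
  rewrite -mulr_sumr.
  have : \sum_j'' h (p j'') = 0.
    by rewrite -[RHS]h0 [RHS](reindex_inj (@perm_inj _ p)).
  rewrite (bigD1 j) //= => e.
  have -> : \sum_(i | i != j) h (p i) = - h (p j) by lra.
  by rewrite mulrN expr2.
have P : 0 <= \sum_(p : {perm 'I_n}) h (p j) ^+ 2 by apply: sumr_ge0 => p _; exact: sqr_ge0.
have n1 : 1 < n%:R :> R by rewrite ltr1n.
move: E1; rewrite E2 => E1.
have : (n%:R - 1) * T <= 0 by rewrite -E1 oppr_le0.
by rewrite pmulr_rle0 // subr_gt0.
Qed.

Lemma perm_var (w : 'I_n -> R) : (forall j, 0 <= w j) -> \sum_s h s = 0 ->
  \sum_(p : {perm 'I_n}) (\sum_j w j * h (p j)) ^+ 2 <=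
  (\sum_j w j ^+ 2) * (#|{: {perm 'I_n}}|%:R / n%:R * \sum_s h s ^+ 2).
Proof.
move=> w0 h0.
have -> : \sum_(p : {perm 'I_n}) (\sum_j w j * h (p j)) ^+ 2 =
   \sum_j \sum_j' w j * w j' * \sum_(p : {perm 'I_n}) h (p j) * h (p j').
  rewrite (eq_bigr (fun p : {perm 'I_n} => \sum_j \sum_j' w j * w j' * (h (p j) * h (p j')))); last first.
    move=> p _; rewrite expr2 mulr_suml; apply: eq_bigr => j _.
    rewrite mulr_sumr; apply: eq_bigr => j' _; ring.
  rewrite exchange_big /=; apply: eq_bigr => j _.
  rewrite exchange_big /=; apply: eq_bigr => j' _.
  by rewrite mulr_sumr.
rewrite mulr_suml; apply: ler_sum => j _.
rewrite (bigD1 j) //= -(perm_diag j).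
have -> : \sum_(p : {perm 'I_n}) h (p j) * h (p j) = \sum_(p : {perm 'I_n}) h (p j) ^+ 2.
  by apply: eq_bigr => p _; rewrite expr2.
rewrite -expr2 -[X in _ <= X]addr0 lerD2l.
apply: sumr_le0 => j' jj'.
apply: mulr_ge0_le0; first by rewrite mulr_ge0.
by apply: perm_off => //; rewrite eq_sym.
Qed.

End Perm.


Section Block.
Variable R : realType.
Variables (n b : nat).
Hypothesis hb : (0 < b)%N.

Definition ind (t j : nat) := ((t * b <= j) && (j < t.+1 * b))%N.

Lemma ind_div t j : ind t j = (t == (j %/ b)%N).
Proof. by rewrite /ind eqn_leq leq_divRL // -[(j %/ b <= t)%N]ltnS ltn_divLR. Qed.

Lemma count_blk (t : nat) : (t.+1 * b <= n)%N ->
  \sum_(j < n | ind t j) (1 : R) = b%:R.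
Proof.
move=> htn.
rewrite -(big_mkord (fun j => ind t j) (fun _ => 1)) /ind.
rewrite -(big_nat_widen _ _ _ (fun j => t * b <= j)%N) //.
rewrite (big_cat_nat _ (n := t * b)) //=; last by rewrite leq_mul2r leqnSn orbT.
rewrite big_nat_cond big1 ?add0r; last by move=> j /andP [/andP [_ h1] h2]; lia.
rewrite big_nat_cond (eq_bigl (fun j => (t * b <= j < t.+1 * b)%N && true)); last first.
  by move=> j /=; case: (t * b <= j)%N; rewrite ?andbT.
rewrite -big_nat_cond sumr_const_nat.
by have -> : (t.+1 * b - t * b = b)%N by rewrite mulSnr addKn.
Qed.

Lemma blk_le1 (i : nat) (j : nat) :
  \sum_(t < i) (if ind t j then 1 else 0 : R) <= 1.
Proof.
case: (pickP (fun t : 'I_i => ind t j)) => [t0 Ht0 | Hn].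
  rewrite (bigD1 t0) //= Ht0 big1 ?addr0 // => t tt0.
  case Ht: (ind t j) => //.
  move: Ht Ht0; rewrite !ind_div => /eqP e1 /eqP e2.
  by move: tt0; rewrite -val_eqE /= e1 e2 eqxx.
by rewrite big1 ?ler01 // => t _; rewrite Hn.
Qed.

End Block.


Lemma eqW {R : realType} (x y : R) : x = y -> x <= y.
Proof. by move->. Qed.

Section Ep.
Variables (R : realType) (n : nat).
Implicit Types F G : {perm 'I_n} -> R.

Lemma Eperm_le F G : (forall p, F p <= G p) -> Eperm F <= Eperm G.
Proof.
move=> h; rewrite /Eperm; apply: ler_wpM2l; first by rewrite invr_ge0 ler0n.
by apply: ler_sum => p _.
Qed.

Lemma EpermD F G : Eperm (fun p => F p + G p) = Eperm F + Eperm G.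
Proof. by rewrite /Eperm big_split mulrDr. Qed.

Lemma EpermZ c F : Eperm (fun p => c * F p) = c * Eperm F.
Proof. by rewrite /Eperm -mulr_sumr mulrCA. Qed.

Lemma Eperm_sum (I : finType) (F : {perm 'I_n} -> I -> R) :
  Eperm (fun p => \sum_k F p k) = \sum_k Eperm (fun p => F p k).
Proof. by rewrite /Eperm exchange_big mulr_sumr. Qed.

Lemma Eperm_const (c : R) : Eperm (fun _ : {perm 'I_n} => c) = c.
Proof.
rewrite /Eperm sumr_const -[c *+ _]mulr_natl mulrA mulVf ?mul1r //.
by rewrite pnatr_eq0 -lt0n card_perm_gt0.
Qed.

End Ep.

Section Main.
Variables (R : realType) (n d b : nat) (grad : 'I_n -> 'rV[R]_d -> 'rV[R]_d).
Variables (beta lam al L : R) (X XT Z : 'rV[R]_d) (i m : nat) (a : 'I_i -> R).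
Hypotheses (hb : (0 < b)%N) (hn : (0 < n)%N) (hmb : (m * b = n)%N) (him : (i <= m)%N)
  (a0 : forall t, 0 <= a t).

Let Y p t := yhat grad b beta lam p al X XT t.+1.
Let D p t := dir grad b beta lam p al X XT t.+1.
Definition W (t : 'I_i) (j : 'I_n) : R := if ind b t j then a t / b%:R else 0.
Definition w j := \sum_t W t j.
Let a1 : R := \sum_(t < i) `|a t|.
Let ainf : R := \big[Num.max/0]_(t < i) `|a t|.

Lemma dir_coord p c : (\sum_(t < i) a t *: D p t) 0 c =
  \sum_t \sum_j W t j * (grad (p j) (Y p t) 0 c).
Proof.
rewrite summxE; apply: eq_bigr => t _.
rewrite mxE /D /dir /dir_of /= mxE summxE big_mkcond mulr_sumr mulr_sumr.
apply: eq_bigr => j _; rewrite /W /ind /Y /yhat /=.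
by case: ifP => _; rewrite ?mulr0 ?mul0r ?mulrA.
Qed.

Lemma W0 t j : 0 <= W t j.
Proof. by rewrite /W; case: ifP => // _; rewrite divr_ge0 ?ler0n. Qed.

Lemma sumWt t : \sum_j W t j = a t.
Proof.
rewrite /W -big_mkcond /=.
have -> : \sum_(j < n | ind b t j) a t / b%:R = a t / b%:R * \sum_(j < n | ind b t j) 1.
  by rewrite mulr_sumr; apply: eq_bigr => j _; rewrite mulr1.
rewrite count_blk //; last first.
  have := ltn_ord t; rewrite -hmb; move=> ht.
  by rewrite leq_mul2r; apply/orP; right; apply: leq_trans him.
by rewrite -mulrA mulVf ?mulr1 // pnatr_eq0 -lt0n.
Qed.

Lemma sumW : \sum_t \sum_j W t j = a1.
Proof. by apply: eq_bigr => t _; rewrite sumWt ger0_norm. Qed.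

Lemma a_le t : a t <= ainf.
Proof. by rewrite -(ger0_norm (a0 t)); apply: (le_bigmax _ (fun t => `|a t|)). Qed.

Lemma ainf_ge0 : 0 <= ainf.
Proof.
case: i a a0 @ainf => [|i'] a' a0' /=; first by rewrite big_ord0.
by apply: le_trans (normr_ge0 (a' ord0)) _; apply: (le_bigmax _ (fun t => `|a' t|)).
Qed.

Lemma w0 j : 0 <= w j.
Proof. by apply: sumr_ge0 => t _; exact: W0. Qed.

Lemma w_le j : w j <= ainf / b%:R.
Proof.
rewrite /w; apply: (@le_trans _ _ (\sum_(t < i) (if ind b t j then (1:R) else 0) * (ainf / b%:R))).
  apply: ler_sum => t _; rewrite /W; case: ifP => _; rewrite ?mul1r ?mul0r //.
  by rewrite ler_pM2r ?a_le // invr_gt0 ltr0n.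
rewrite -mulr_suml; apply: ler_piMl; first by rewrite divr_ge0 ?ainf_ge0 ?ler0n.
exact: blk_le1.
Qed.

Lemma sum_w : \sum_j w j = a1.
Proof. by rewrite /w exchange_big /= sumW. Qed.

Let G := gradf grad Z.
Let g s := grad s Z - G.

Definition Acoord (p : {perm 'I_n}) (c : 'I_d) := \sum_(pr : 'I_i * 'I_n)
   W pr.1 pr.2 * (grad (p pr.2) (Y p pr.1) - grad (p pr.2) Z) 0 c.

Lemma dec (p : {perm 'I_n}) (c : 'I_d) : (\sum_(t < i) a t *: D p t) 0 c =
  Acoord p c + \sum_j w j * g (p j) 0 c + a1 * G 0 c.
Proof.
rewrite dir_coord.
transitivity (\sum_t \sum_j (W t j * (grad (p j) (Y p t) - grad (p j) Z) 0 c
   + W t j * g (p j) 0 c + W t j * G 0 c)).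
  by apply: eq_bigr => t _; apply: eq_bigr => j _; rewrite /g !mxE; ring.
under eq_bigr do rewrite !big_split /=.
rewrite !big_split /=.
congr (_ + _ + _).
- by rewrite /Acoord pair_big /=.
- rewrite exchange_big /=; apply: eq_bigr => j _; by rewrite /w mulr_suml.
- rewrite -sumW mulr_suml; apply: eq_bigr => t _; by rewrite mulr_suml.
Qed.

Lemma sqnorm_ge0 (v : 'rV[R]_d) : 0 <= sqnorm v.
Proof. by apply: sumr_ge0 => c _; exact: sqr_ge0. Qed.

Hypothesis Lip : forall s x y, enorm (grad s x - grad s y) <= L * enorm (x - y).

Lemma lipsq s x y : sqnorm (grad s x - grad s y) <= L ^+ 2 * sqnorm (x - y).
Proof.
have h := Lip s x y; rewrite /enorm in h.
rewrite -(sqr_sqrtr (sqnorm_ge0 (grad s x - grad s y))) -(sqr_sqrtr (sqnorm_ge0 (x - y))).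
rewrite -exprMn; apply: lerXn2r; rewrite ?nnegrE ?sqrtr_ge0 //.
exact: le_trans (sqrtr_ge0 _) h.
Qed.

Lemma a1_ge0 : 0 <= a1.
Proof. by apply: sumr_ge0 => t _; exact: normr_ge0. Qed.

Lemma pb (F : 'I_i -> 'I_n -> R) :
  \sum_(pr : 'I_i * 'I_n) F pr.1 pr.2 = \sum_t \sum_j F t j.
Proof. by rewrite pair_big. Qed.

Lemma Abound p : \sum_c Acoord p c ^+ 2 <=
  a1 * (ainf * (L ^+ 2 * \sum_(t < m) sqnorm (Y p t - Z))).
Proof.
set e := fun (pr : 'I_i * 'I_n) => grad (p pr.2) (Y p pr.1) - grad (p pr.2) Z.
have cs c : Acoord p c ^+ 2 <= a1 * \sum_pr W pr.1 pr.2 * (e pr 0 c) ^+ 2.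
  have := @cs_w R _ (fun pr : 'I_i * 'I_n => W pr.1 pr.2) (fun pr => e pr 0 c) (fun pr => W0 _ _).
  by rewrite (pb W) sumW.
apply: le_trans (ler_sum _ (fun c _ => cs c)) _.
rewrite -mulr_sumr; apply: ler_wpM2l; first exact: a1_ge0.
rewrite exchange_big /=.
apply: (@le_trans _ _ (\sum_(pr : 'I_i * 'I_n) W pr.1 pr.2 * (L ^+ 2 * sqnorm (Y p pr.1 - Z)))).
  apply: ler_sum => pr _; rewrite -mulr_sumr; apply: ler_wpM2l; first exact: W0.
  exact: lipsq.
rewrite (pb (fun t j => W t j * (L ^+ 2 * sqnorm (Y p t - Z)))).
rewrite (eq_bigr (fun t : 'I_i => a t * (L ^+ 2 * sqnorm (Y p t - Z)))); last by move=> t _; rewrite -mulr_suml sumWt.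
apply: (@le_trans _ _ (\sum_(t < i) ainf * (L ^+ 2 * sqnorm (Y p t - Z)))).
  apply: ler_sum => t _; apply: ler_wpM2r; last exact: a_le.
  by rewrite mulr_ge0 ?sqr_ge0 ?sqnorm_ge0.
rewrite -mulr_sumr; apply: ler_wpM2l; first exact: ainf_ge0.
rewrite -mulr_sumr; apply: ler_wpM2l; first exact: sqr_ge0.
rewrite (big_ord_widen _ (fun t => sqnorm (Y p t - Z)) him).
rewrite [X in _ <= X](bigID (fun t : 'I_m => (t < i)%N)) /= lerDl.
by apply: sumr_ge0 => t _; exact: sqnorm_ge0.
Qed.

Lemma point p : sqnorm (\sum_(t < i) a t *: D p t) <=
  3 * (a1 * (ainf * (L ^+ 2 * \sum_(t < m) sqnorm (Y p t - Z)))
       + \sum_c (\sum_j w j * g (p j) 0 c) ^+ 2 + a1 ^+ 2 * sqnorm G).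
Proof.
rewrite {1}/sqnorm.
under eq_bigr do rewrite dec.
apply: le_trans (ler_sum _ (fun c _ => @sq3 R _ _ _)) _.
rewrite -mulr_sumr; apply: ler_wpM2l => //.
rewrite !big_split /=; apply: lerD; first apply: lerD.
- exact: Abound.
- by [].
- by rewrite /sqnorm mulr_sumr; apply/eqW/eq_bigr => c _; rewrite exprMn.
Qed.

Lemma sum_g c : \sum_s g s 0 c = 0.
Proof.
rewrite /g /G /gradf.
under eq_bigr do rewrite !mxE summxE.
rewrite sumrB sumr_const card_ord -[X in _ - X]mulr_natl mulrA mulfV ?mul1r ?subrr //.
by rewrite pnatr_eq0 -lt0n.
Qed.

Lemma sigma2E : sigma2 grad Z = n%:R^-1 * \sum_s sqnorm (g s).
Proof. by []. Qed.

Lemma Bbound_a (p : {perm 'I_n}) : \sum_c (\sum_j w j * g (p j) 0 c) ^+ 2 <=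
  a1 * (ainf * (m%:R * sigma2 grad Z)).
Proof.
have cs c : (\sum_j w j * g (p j) 0 c) ^+ 2 <= a1 * \sum_j w j * g (p j) 0 c ^+ 2.
  by have := @cs_w R _ w (fun j => g (p j) 0 c) w0; rewrite sum_w.
apply: le_trans (ler_sum _ (fun c _ => cs c)) _.
rewrite -mulr_sumr; apply: ler_wpM2l; first exact: a1_ge0.
rewrite exchange_big /=.
apply: (@le_trans _ _ (\sum_j ainf / b%:R * sqnorm (g (p j)))).
  apply: ler_sum => j _; rewrite -mulr_sumr; apply: ler_wpM2r; last exact: w_le.
  exact: sqnorm_ge0.
rewrite -mulr_sumr.
have -> : \sum_j sqnorm (g (p j)) = \sum_s sqnorm (g s)
  by rewrite [RHS](reindex_inj (@perm_inj _ p)).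
rewrite sigma2E.
have hb' : b%:R != 0 :> R by rewrite pnatr_eq0 -lt0n.
have hn' : n%:R != 0 :> R by rewrite pnatr_eq0 -lt0n.
have -> : m%:R = n%:R / b%:R :> R by rewrite -hmb natrM mulfK.
rewrite -!mulrA; apply/eqW; congr (_ * _).
by rewrite mulrCA (mulrA n%:R) mulfV // mul1r.
Qed.

Lemma Bbound_b : Eperm (fun p : {perm 'I_n} => \sum_c (\sum_j w j * g (p j) 0 c) ^+ 2) <=
  a1 * (ainf * (b%:R^-1 * sigma2 grad Z)).
Proof.
rewrite Eperm_sum.
apply: (@le_trans _ _ (\sum_c (\sum_j w j ^+ 2) * (n%:R^-1 * \sum_s g s 0 c ^+ 2))).
  apply: ler_sum => c _.
  have h := @perm_var R n (fun s => g s 0 c) w w0 (sum_g c).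
  rewrite /Eperm.
  apply: le_trans (ler_wpM2l _ h) _; first by rewrite invr_ge0 ler0n.
  have hc : #|{: {perm 'I_n}}|%:R != 0 :> R by rewrite pnatr_eq0 -lt0n card_perm_gt0.
  have hn' : n%:R != 0 :> R by rewrite pnatr_eq0 -lt0n.
  by apply: eqW; field; rewrite hc hn'.
rewrite -mulr_sumr.
have -> : \sum_(c < d) n%:R^-1 * \sum_s g s 0 c ^+ 2 = sigma2 grad Z
  by rewrite -mulr_sumr exchange_big.
apply: (@le_trans _ _ ((a1 * (ainf / b%:R)) * sigma2 grad Z)); last first.
  by apply: eqW; rewrite !mulrA.
apply: ler_wpM2r.
  rewrite sigma2E mulr_ge0 ?invr_ge0 ?ler0n //.
  by apply: sumr_ge0 => s _; exact: sqnorm_ge0.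
apply: (@le_trans _ _ (\sum_j w j * (ainf / b%:R))).
  apply: ler_sum => j _; rewrite expr2; apply: ler_wpM2l; [exact: w0 | exact: w_le].
by rewrite -mulr_suml sum_w.
Qed.

End Main.


Theorem lemmaB1 (R : realType) (n d b : nat)
  (f : 'I_n -> 'rV[R]_d -> R) (grad : 'I_n -> 'rV[R]_d -> 'rV[R]_d)
  (L : R) (beta lam : R) (alpha : nat -> R)
  (pi : nat -> {perm 'I_n}) (x1 : 'rV[R]_d) :
  (0 < n)%N -> (0 < b)%N -> (b %| n)%N ->
  (* f_i continuously differentiable with gradient grad i *)
  (forall i x, differentiable (f i) x) ->
  (forall i x v, is_derive x v (f i) (dotv (grad i x) v)) ->
  (forall i, continuous (grad i)) ->
  (* (A.a) *)
  0 < L ->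
  (forall i x y, enorm (grad i x - grad i y) <= L * enorm (x - y)) ->
  (exists fbar : R, forall i x, fbar <= f i x) ->
  0 <= beta -> beta < 1 ->
  (forall k, 0 < alpha k) ->
  let m := (n %/ b)%N in
  let x := xk grad b beta lam m pi alpha x1 in
  let xt := xtk grad b beta lam m pi alpha x1 in
  let z := zk grad b beta lam m pi alpha x1 in
  (* (a): arbitrary permutations *)
  (forall (k i : nat) (a : 'I_i -> R) (p : {perm 'I_n}),
     (1 <= k)%N -> (1 <= i <= m)%N -> (forall t, 0 <= a t) ->
     let a1 : R := \sum_(t < i) `|a t| in
     let ainf : R := \big[Num.max/0]_(t < i) `|a t| in
     sqnorm (\sum_(t < i) a t *: dir grad b beta lam p (alpha k) (x k) (xt k) t.+1)
     <= 3 * a1 * ainf *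
          (L ^+ 2 * \sum_(t < m) sqnorm (yhat grad b beta lam p (alpha k) (x k) (xt k) t.+1 - z k)
           + m%:R * sigma2 grad (z k))
        + 3 * a1 ^+ 2 * sqnorm (gradf grad (z k)))
  /\
  (* (b): under (A.c), E_k = uniform average over pi^k *)
  (forall (k i : nat) (a : 'I_i -> R),
     (1 <= k)%N -> (1 <= i <= m)%N -> (forall t, 0 <= a t) ->
     let a1 : R := \sum_(t < i) `|a t| in
     let ainf : R := \big[Num.max/0]_(t < i) `|a t| in
     Eperm (fun p => sqnorm (\sum_(t < i) a t *: dir grad b beta lam p (alpha k) (x k) (xt k) t.+1))
     <= 3 * a1 * ainf *
          (L ^+ 2 * \sum_(t < m)
              Eperm (fun p => sqnorm (yhat grad b beta lam p (alpha k) (x k) (xt k) t.+1 - z k))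
           + b%:R^-1 * sigma2 grad (z k))
        + 3 * a1 ^+ 2 * sqnorm (gradf grad (z k))).
Proof.
move=> hn hb hbn _ _ _ L0 Lip _ b0 b1 al0 m x xt z.
have hmb : (m * b = n)%N by rewrite /m divnK.
split.
- move=> k i a p hk /andP [hi1 him] a0; cbv zeta.
  have hP := @point R n d b grad beta lam (alpha k) L (x k) (xt k) (z k) i m a hb hmb him a0 Lip p.
  have hB := @Bbound_a R n d b grad (z k) i m a hb hn hmb him a0 p.
  rewrite /= in hP hB.
  lra.
- move=> k i a hk /andP [hi1 him] a0; cbv zeta.
  have hP := fun p => @point R n d b grad beta lam (alpha k) L (x k) (xt k) (z k) i m a hb hmb him a0 Lip p.
  have hB := @Bbound_b R n d b grad (z k) i m a hb hn hmb him a0.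
  apply: le_trans; first by apply: Eperm_le => p; exact: hP.
  rewrite /= EpermZ EpermD EpermD EpermZ EpermZ EpermZ Eperm_sum Eperm_const.
  lra.
Qed.
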